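(* Let $m\le n$ and let $\bm W\in\mathbb{R}^{m\times n}$ be a (deterministic) matrix with $\bm W\bm W^T=\bm I_m$ and $\bm\xi_m^T\bm W\bm\xi_n=1$. Let $\bm x\in\mathbb{R}^n$ be a random vector with $\mathbb{E}[\bm x]=\mu\bm 1_n$ and $\operatorname{Cov}[\bm x]=\sigma^2\bm I_n$, where $\mu\in\mathbb{R}$ and $\sigma>0$. Then \[ \mathbb{E}[\bm W\bm x]=\mu\sqrt{\tfrac nm}\,\bm 1_m,\qquad \operatorname{Cov}[\bm W\bm x]=\sigma^2\bm I_m. \]
   Context: $\bm 1_k$ denotes the all-ones vector in $\mathbb{R}^k$ and $\bm\xi_k=\frac{1}{\sqrt k}\bm 1_k$. *)

(* Defs.v *)
From HB Require Import structures.
From mathcomp Require Import all_boot all_order all_algebra.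
From mathcomp Require Import all_classical all_reals all_analysis.
Set Implicit Arguments. Unset Strict Implicit. Unset Printing Implicit Defensive.
Import Order.TTheory GRing.Theory Num.Theory.
Local Open Scope ring_scope.

Definition ones_cV (R : realType) (k : nat) : 'cV[R]_k := const_mx 1.

Definition xi (R : realType) (k : nat) : 'cV[R]_k :=
  (Num.sqrt (k%:R : R))^-1 *: ones_cV R k.

Definition mxRV d (T : measurableType d) (R : realType) (m n : nat)
  (W : 'M[R]_(m, n)) (x : 'I_n -> T -> R) : 'I_m -> T -> R :=
  fun k t => \sum_(j < n) W k j * x j t.

(* Main.v *)
Require Import Defs.
From HB Require Import structures.
From mathcomp Require Import all_boot all_order all_algebra.
From mathcomp Require Import all_classical all_reals all_analysis.
From mathcomp Require Import ring lra.
Import Order.TTheory GRing.Theory Num.Theory.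
Local Open Scope ring_scope.
Section S.
Context (R : realType) (d : measure_display) (T : measurableType d)
  (P : probability T R).

Let p2 : (1 <= (2%:E : \bar R))%E.
Proof. by rewrite lee_fin ler1n. Qed.

Lemma L2D (f g : T -> R) : f \in Lfun P 2%:E -> g \in Lfun P 2%:E ->
  (f \+ g) \in Lfun P 2%:E.
Proof. move=> hf hg; exact: ((Lfun_addr_closed P p2).2 f g hf hg). Qed.

Lemma L2Z (f : T -> R) a : f \in Lfun P 2%:E -> (a \o* f) \in Lfun P 2%:E.
Proof. move=> hf; apply: Lfun_scale => //. Qed.

Lemma L21 (f : T -> R) : f \in Lfun P 2%:E -> f \in Lfun P 1.
Proof. apply: Lfun_subset12; exact: fin_num_measure. Qed.

Lemma L2sum (I : Type) (s : seq I) (a : I -> R) (X : I -> T -> R) :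
  (forall j, X j \in Lfun P 2%:E) ->
  (fun t => \sum_(j <- s) a j * X j t) \in Lfun P 2%:E.
Proof.
move=> hX; elim: s => [|j s IH].
  have -> : (fun t => \sum_(j <- [::]) a j * X j t) = cst 0.
    by apply: funext => t; rewrite big_nil.
  exact: Lfun_cst.
have -> : (fun t => \sum_(i <- j :: s) a i * X i t) =
   ((a j \o* X j) \+ (fun t => \sum_(i <- s) a i * X i t)).
  by apply: boolp.funext => t /=; rewrite big_cons mulrC.
by apply: L2D => //; apply: L2Z.
Qed.

Lemma Esum (I : Type) (s : seq I) (a e : I -> R) (X : I -> T -> R) :
  (forall j, X j \in Lfun P 2%:E) ->
  (forall j, 'E_P[X j] = (e j)%:E)%E ->
  ('E_P[fun t => (\sum_(j <- s) a j * X j t)%R] = ((\sum_(j <- s) a j * e j)%R)%:E)%E.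
Proof.
move=> hX he; elim: s => [|j s IH].
  have -> : (fun t => \sum_(j <- [::]) a j * X j t) = cst 0.
    by apply: funext => t; rewrite big_nil.
  by rewrite expectation_cst big_nil.
have -> : (fun t => \sum_(i <- j :: s) a i * X i t) =
   ((a j \o* X j) \+ (fun t => \sum_(i <- s) a i * X i t)).
  by apply: boolp.funext => t /=; rewrite big_cons mulrC.
rewrite expectationD; last 2 first.
- by apply: L21; apply: L2Z.
- by apply: L21; apply: L2sum.
by rewrite IH expectationZl ?he ?L21// big_cons EFinD EFinM.
Qed.

Lemma Csum (I : Type) (s : seq I) (a c : I -> R) (X : I -> T -> R) (Z : T -> R) :
  (forall j, X j \in Lfun P 2%:E) -> Z \in Lfun P 2%:E ->
  (forall j, covariance P (X j) Z = (c j)%:E) ->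
  covariance P (fun t => \sum_(j <- s) a j * X j t) Z = (\sum_(j <- s) a j * c j)%:E.
Proof.
move=> hX hZ hc; elim: s => [|j s IH].
  have -> : (fun t => \sum_(j <- [::]) a j * X j t) = cst 0.
    by apply: funext => t; rewrite big_nil.
  by rewrite covariance_cst_l big_nil.
have -> : (fun t => \sum_(i <- j :: s) a i * X i t) =
   ((a j \o* X j) \+ (fun t => \sum_(i <- s) a i * X i t)).
  by apply: boolp.funext => t /=; rewrite big_cons mulrC.
rewrite covarianceDl; last 3 first.
- by apply: L2Z.
- by apply: L2sum.
- by [].
rewrite IH covarianceZl; [|exact: L21|exact: L21|exact: Lfun2_mul_Lfun1].
by rewrite hc big_cons EFinD EFinM.
Qed.

End S.
Lemma rowsum (R : realType) m n (W : 'M[R]_(m,n)) :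
  W *m W^T = 1%:M -> (xi R m)^T *m W *m xi R n = 1%:M ->
  forall k, \sum_j W k j = Num.sqrt (n%:R / m%:R).
Proof.
move=> HW Hxi.
have H1 : forall k l, \sum_j W k j * W l j = (k == l)%:R.
  move=> k l; have := congr1 (fun M : 'M[R]_m => M k l) HW.
  by rewrite !mxE => <-; apply: eq_bigr => j _; rewrite mxE.
set r := fun k => \sum_j W k j.
set sm := Num.sqrt (m%:R : R); set sn := Num.sqrt (n%:R : R).
have H2 : sm^-1 * sn^-1 * \sum_k r k = 1.
  have := congr1 (fun M : 'M[R]_1 => M ord0 ord0) Hxi.
  rewrite !mxE eqxx mulr1n => <-.
  rewrite /r exchange_big mulr_sumr; apply: eq_bigr => j _.
  rewrite !mxE mulr_sumr mulr_suml; apply: eq_bigr => k _.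
  by rewrite mxE /xi /ones_cV !mxE !mulr1 -/sn -/sm; ring.
have smn0 : sm != 0.
  by apply/eqP => h; move: H2; rewrite h invr0 !mul0r => /eqP; rewrite eq_sym oner_eq0.
have snn0 : sn != 0.
  by apply/eqP => h; move: H2; rewrite h invr0 mulr0 mul0r => /eqP; rewrite eq_sym oner_eq0.
have Hsum : \sum_k r k = sm * sn.
  apply: (@mulfI _ (sm^-1 * sn^-1)); first by rewrite mulf_neq0 ?invr_eq0.
  by rewrite H2 mulrACA !mulVf // mulr1.
have F : forall k l, \sum_j (r k * W k j) * (r l * W l j) = r k * r l * (k == l)%:R.
  by move=> k l; rewrite -H1 mulr_sumr; apply: eq_bigr => j _; ring.
have HS : \sum_k r k ^+ 2 <= n%:R.
  set s := fun j => \sum_k r k * W k j.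
  have E1 : \sum_j s j = \sum_k r k ^+ 2.
    by rewrite /s exchange_big; apply: eq_bigr => k _; rewrite -mulr_sumr expr2.
  have E2 : \sum_j s j ^+ 2 = \sum_k r k ^+ 2.
    under eq_bigr do rewrite expr2 {1}/s mulr_suml.
    rewrite exchange_big; apply: eq_bigr => k _.
    under eq_bigr do rewrite mulr_sumr.
    rewrite exchange_big /= (bigD1 k) //= F eqxx mulr1 expr2 big1 ?addr0 //.
    by move=> l /negPf lk; rewrite F eq_sym lk mulr0.
  have : 0 <= \sum_j (1 - s j) ^+ 2 by apply: sumr_ge0 => j _; exact: sqr_ge0.
  rewrite (eq_bigr (fun j => 1 + (s j ^+ 2 - s j *+ 2))); last by move=> j _; rewrite sqrrB expr1n; ring.
  rewrite big_split sumrB sumrMnl /= sumr_const card_ord E1 E2.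
  move=> h; rewrite -subr_ge0; apply: le_trans h _; rewrite le_eqVlt; apply/orP; left; apply/eqP.
  ring.
set c := Num.sqrt (n%:R / m%:R).
have m0 : m%:R != 0 :> R by apply/eqP => h; move: smn0; rewrite /sm h sqrtr0 eqxx.
have csm : c * sm = sn by rewrite -sqrtrM ?divr_ge0 // mulfVK.
have snn : sn * sn = n%:R by rewrite -expr2 sqr_sqrtr.
have smm : sm ^+ 2 = m%:R by rewrite sqr_sqrtr.
have Q : \sum_k (r k - c) ^+ 2 = \sum_k r k ^+ 2 - n%:R.
  rewrite (eq_bigr (fun k => r k ^+ 2 + (c ^+ 2 - (c * r k) *+ 2))); last first.
    by move=> k _; rewrite sqrrB; ring.
  rewrite big_split sumrB sumrMnl /= sumr_const card_ord -mulr_sumr Hsum.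
  rewrite -[c ^+ 2 *+ m]mulr_natl -smm -snn -csm; ring.
have Z : \sum_k (r k - c) ^+ 2 = 0.
  apply/eqP; rewrite eq_le sumr_ge0 ?andbT; last by move=> k _; exact: sqr_ge0.
  by rewrite Q subr_le0.
move=> k; apply/eqP; rewrite -subr_eq0 -sqrf_eq0; apply/eqP.
by move/psumr_eq0P: Z => -> // i _; exact: sqr_ge0.
Qed.

Theorem proposition3 (R : realType) (d : measure_display) (T : measurableType d)
  (P : probability T R) (m n : nat) (W : 'M[R]_(m, n))
  (x : 'I_n -> T -> R) (mu sigma : R) :
  (m <= n)%N ->
  W *m W^T = 1%:M ->
  (xi R m)^T *m W *m xi R n = 1%:M ->
  (forall i, x i \in Lfun P 2%:E) ->
  (forall i, 'E_P[x i] = mu%:E)%E ->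
  (forall i j, covariance P (x i) (x j) = (sigma ^+ 2 * (i == j)%:R)%:E) ->
  0 < sigma ->
  (forall k, 'E_P[mxRV W x k] = (mu * Num.sqrt (n%:R / m%:R))%:E)%E /\
  (forall k l, covariance P (mxRV W x k) (mxRV W x l)
                 = (sigma ^+ 2 * (k == l)%:R)%:E).
Proof.
move=> _ HW Hxi hL2 hE hC _.
have Hr := @rowsum _ _ _ W HW Hxi.
have H1 : forall k l, \sum_j W k j * W l j = (k == l)%:R.
  move=> k l; have := congr1 (fun M : 'M[R]_m => M k l) HW.
  by rewrite !mxE => <-; apply: eq_bigr => j _; rewrite mxE.
have L2W : forall k, mxRV W x k \in Lfun P 2%:E.
  by move=> k; exact: (L2sum _ _ _ P _ (index_enum 'I_n) (W k) _ hL2).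
split.
  move=> k; rewrite /mxRV (Esum _ _ _ P _ (index_enum 'I_n) (W k) _ _ hL2 hE).
  by rewrite -mulr_suml Hr mulrC.
have Ci : forall l j, covariance P (x j) (mxRV W x l) = (W l j * sigma ^+ 2)%:E.
  move=> l j; rewrite covarianceC /mxRV.
  rewrite (Csum _ _ _ P _ (index_enum 'I_n) (W l) (fun i => sigma ^+ 2 * (i == j)%:R) _ _ hL2 (hL2 j)) //.
  congr (_%:E); rewrite (bigD1 j) //= eqxx mulr1 big1 ?addr0 //.
  by move=> i /negPf ->; rewrite mulr0 mulr0.
move=> k l; rewrite {1}/mxRV.
rewrite (Csum _ _ _ P _ (index_enum 'I_n) (W k) (fun j => W l j * sigma ^+ 2) _ _ hL2 (L2W l) (Ci l)).
congr (_%:E); rewrite -H1 mulr_sumr; apply: eq_bigr => j _; ring.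
Qed.
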